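(* Let $G$ be a path-connected $H$-space and let $f,g\colon G\times G\to G$ be continuous maps. Then $\mathrm{D}(f,g)\leq \mathrm{cat}(G)$.
   Context: An $H$-space is a topological space $G$ together with continuous maps $\mu\colon G\times G\to G$ (multiplication) and $\delta\colon G\times G\to G$ (division) and an element $x_0\in G$ such that the map $G\times G\to G$, $(x,y)\mapsto \mu(x,\delta(x,y))$, is homotopic to the second projection $p_2$, and the map $x\mapsto\mu(x,x_0)$ is homotopic to $\mathrm{id}_G$ (associativity is not required). For continuous maps $f,g\colon X\to Y$, the homotopic distance $\mathrm{D}(f,g)$ is the least integer $n\geq 0$ such that there is an open cover $\{U_0,\dots,U_n\}$ of $X$ with $f|_{U_j}\simeq g|_{U_j}$ for all $j$ ($\infty$ if none exists). For a path-connected space $X$, $\mathrm{cat}(X)$ is the least integer $n\geq 0$ such that $X$ can be covered by $n+1$ open sets whose inclusions into $X$ are null-homotopic. *)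

(* Defs.v *)
From HB Require Import structures.
From mathcomp Require Import all_boot all_order all_algebra.
From mathcomp Require Import all_classical all_reals all_analysis.
From mathcomp Require Import Rstruct Rstruct_topology.
From Stdlib Require Import Rdefinitions.

Set Implicit Arguments.
Unset Strict Implicit.
Unset Printing Implicit Defensive.

Import Order.TTheory GRing.Theory Num.Theory.
Local Open Scope classical_set_scope.
Local Open Scope ring_scope.

Definition unitI : set R := `[0%R, 1%R]%classic.

Definition homotopic_on {X Y : topologicalType} (U : set X) (f g : X -> Y) : Prop :=
  exists H : X * R -> Y,
    {within U `*` unitI, continuous H} /\
    (forall x, U x -> H (x, 0%R) = f x /\ H (x, 1%R) = g x).

Definition homotopic {X Y : topologicalType} (f g : X -> Y) : Prop :=
  homotopic_on setT f g.

Definition incl_nullhomotopic {X : topologicalType} (U : set X) : Prop :=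
  exists c : X, homotopic_on U idfun (fun _ => c).

Definition path_connected (X : topologicalType) : Prop :=
  (exists x : X, True) /\
  forall x y : X, exists p : R -> X,
    {within unitI, continuous p} /\ p 0%R = x /\ p 1%R = y.

Definition is_Hspace (G : topologicalType) (mu delta : G * G -> G) (x0 : G) : Prop :=
  continuous mu /\ continuous delta /\
  homotopic (fun p : G * G => mu (p.1, delta (p.1, p.2))) (fun p => p.2) /\
  homotopic (fun x : G => mu (x, x0)) idfun.

(* extended naturals: None stands for infinity *)
Definition ole (a b : option nat) : Prop :=
  match a, b with
  | _, None => True
  | None, Some _ => False
  | Some m, Some n => leq m n
  end.

Definition hdist_le {X Y : topologicalType} (f g : X -> Y) (n : nat) : Prop :=
  exists U : nat -> set X,
    (forall j, leq j n -> open (U j)) /\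
    (forall x, exists2 j, leq j n & U j x) /\
    (forall j, leq j n -> homotopic_on (U j) f g).

Definition cat_le (X : topologicalType) (n : nat) : Prop :=
  exists U : nat -> set X,
    (forall j, leq j n -> open (U j)) /\
    (forall x, exists2 j, leq j n & U j x) /\
    (forall j, leq j n -> incl_nullhomotopic (U j)).

Lemma asbool_ex (P : nat -> Prop) : (exists n, P n) -> exists n, `[< P n >].
Proof. by case=> n Pn; exists n; apply/asboolP. Qed.

Definition least_ext (P : nat -> Prop) : option nat :=
  match pselect (exists n, P n) with
  | left h => Some (ex_minn (asbool_ex h))
  | right _ => None
  end.

Definition hdist {X Y : topologicalType} (f g : X -> Y) : option nat :=
  least_ext (hdist_le f g).

Definition LScat (X : topologicalType) : option nat := least_ext (cat_le X).

(* Main.v *)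
Require Import Defs.
From mathcomp Require Import all_boot all_order all_algebra.
From mathcomp Require Import all_classical all_reals all_analysis.
From mathcomp Require Import Rstruct Rstruct_topology.
From Stdlib Require Import Rdefinitions.
Set Implicit Arguments.
Unset Strict Implicit.
Unset Printing Implicit Defensive.
Import Order.TTheory GRing.Theory Num.Theory.
Local Open Scope classical_set_scope.
Local Open Scope ring_scope.

Lemma pair_cont {A B C : topologicalType} (a : A -> B) (b : A -> C) :
  continuous a -> continuous b -> continuous (fun q => (a q, b q)).
Proof. by move=> ca cb x; apply: cvg_pair; [exact: ca|exact: cb]. Qed.

Lemma fst_cont {A B : topologicalType} : continuous (@fst A B).
Proof. by move=> [x y]; exact: cvg_fst. Qed.
Lemma snd_cont {A B : topologicalType} : continuous (@snd A B).
Proof. by move=> [x y]; exact: cvg_snd. Qed.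

Lemma aff_cont (c d : R) : continuous (fun t : R => c * t + d).
Proof.
move=> t.
apply: (@continuousD R R^o _ (fun t : R => c * t) (fun _ => d)); last exact: cvg_cst.
apply: (@continuousM _ _ (fun _ => c) id); [exact: cvg_cst|exact: cvg_id].
Qed.
From mathcomp Require Import lra.
Lemma z0 : IZR Z0 = (0 : R). Proof. reflexivity. Qed.
Lemma z1 : IZR (Zpos xH) = (1 : R). Proof. reflexivity. Qed.
Lemma unitIE t : unitI t = (0 <= t <= 1).
Proof. by rewrite /unitI /= in_itv. Qed.
Lemma uI t : unitI t -> unitI (-1 * t + 1).
Proof. rewrite !unitIE => /andP[h1 h2]; apply/andP; split; lra. Qed.
Lemma within_comp_sub {A B C : topologicalType} (S : set A) (S' : set B)
  (k : A -> B) (h : B -> C) :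
  {within S, continuous k} -> (forall x, S x -> S' (k x)) ->
  {within S', continuous h} -> {within S, continuous (h \o k)}.
Proof.
move=> /subspace_continuousP ck kS /subspace_continuousP ch.
apply/subspace_continuousP => x Sx.
apply: cvg_trans (ch _ (kS _ Sx)).
move=> P; rewrite /= !nbhs_simpl /= => HP.
have := ck _ Sx _ HP. rewrite /= !nbhs_simpl /=. rewrite /within /=.
apply: filterS => z H Sz; exact: H Sz (kS _ Sz).
Qed.

Lemma near_piece {T U : topologicalType} (S A : set T) (f : T -> U) x W :
  closed A -> {within S `&` A, continuous f} -> S x -> nbhs (f x) W ->
  nbhs x (fun y => S y -> A y -> W (f y)).
Proof.
move=> cA /subspace_continuousP cf Sx HW.
have [Ax|nAx] := pselect (A x).
  have := cf x (conj Sx Ax) _ HW; rewrite /= !nbhs_simpl /= /within /=.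
  by apply: filterS => y H Sy Ay; exact: H (conj Sy Ay).
have : nbhs x (~` A) by apply: open_nbhs_nbhs; split => //; exact: closed_openC.
by apply: filterS => y nAy _ Ay.
Qed.

Lemma paste {T U : topologicalType} (S A B : set T) (f : T -> U) :
  closed A -> closed B -> S `<=` A `|` B ->
  {within S `&` A, continuous f} -> {within S `&` B, continuous f} ->
  {within S, continuous f}.
Proof.
move=> cA cB SAB cfA cfB; apply/subspace_continuousP => x Sx W HW.
rewrite /= !nbhs_simpl /= /within /=.
have h1 := near_piece cA cfA Sx HW.
have h2 := near_piece cB cfB Sx HW.
apply: filterS2 h1 h2 => y H1 H2 Sy.
by case: (SAB _ Sy) => [/(H1 Sy)|/(H2 Sy)].
Qed.

Lemma aff_snd_cont {X : topologicalType} (c d : R) :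
  continuous (fun q : X * R => c * q.2 + d).
Proof.
move=> q; apply: (continuous_comp (f := snd) (g := fun t => c * t + d)).
  exact: snd_cont.
exact: aff_cont.
Qed.

Lemma hom_ext {X Y : topologicalType} (U : set X) (f g f' g' : X -> Y) :
  homotopic_on U f g -> (forall x, U x -> f x = f' x) ->
  (forall x, U x -> g x = g' x) -> homotopic_on U f' g'.
Proof.
case=> H [cH Hfg] ef eg; exists H; split=> // x Ux.
by case: (Hfg x Ux) => -> ->; split; [exact: ef|exact: eg].
Qed.

Lemma hom_pre {X X' Y : topologicalType} (V : set X) (U : set X') (k : X' -> X)
  (f g : X -> Y) : continuous k -> (forall x, U x -> V (k x)) ->
  homotopic_on V f g -> homotopic_on U (f \o k) (g \o k).
Proof.
move=> ck kU [H [cH Hfg]]; exists (fun q => H (k q.1, q.2)); split.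
  apply: (within_comp_sub (k := fun q => (k q.1, q.2)) (S' := V `*` unitI)) => //.
    apply: continuous_subspaceT; apply: pair_cont; last exact: snd_cont.
    by move=> q; apply: continuous_comp; [exact: fst_cont|exact: ck].
  by move=> [x t] [/= Ux It]; split => //; exact: kU.
by move=> x Ux; exact: Hfg _ (kU _ Ux).
Qed.

Lemma hom_pair {X Y Z W : topologicalType} (U : set X) (m : Y * Z -> W)
  (k : X -> Y) (a b : X -> Z) : continuous m -> continuous k ->
  homotopic_on U a b ->
  homotopic_on U (fun p => m (k p, a p)) (fun p => m (k p, b p)).
Proof.
move=> cm ck [H [cH Hab]]; exists (fun q => m (k q.1, H q)); split.
  have c0 : continuous (fun q : subspace (U `*` unitI) => k q.1).
    apply: continuous_subspaceT.
    by move=> r; apply: continuous_comp; [exact: fst_cont|exact: ck].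
  have c1 : continuous (fun q : subspace (U `*` unitI) => (k q.1, H q)).
    exact: (@pair_cont _ _ _ (fun q : subspace (U `*` unitI) => k q.1) H c0 cH).
  move=> q; exact: (continuous_comp (c1 q) (cm _)).
by move=> x Ux; case: (Hab x Ux) => -> ->.
Qed.

Lemma hom_sym {X Y : topologicalType} (U : set X) (f g : X -> Y) :
  homotopic_on U f g -> homotopic_on U g f.
Proof.
move=> [H [cH Hfg]]; exists (fun q => H (q.1, -1 * q.2 + 1)); split.
  apply: (within_comp_sub (k := fun q : X * R => (q.1, -1 * q.2 + 1)) (h := H) (S' := U `*` unitI)) => //.
    apply: continuous_subspaceT; apply: pair_cont; first exact: fst_cont.
    exact: aff_snd_cont.
  by move=> [x t] [/= Ux It]; split => //; exact: uI.
move=> x Ux; case: (Hfg x Ux) => H0 H1; split.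
  rewrite -H1; congr H; congr pair => /=.
  by rewrite mulr0 add0r.
rewrite -H0; congr H; congr pair => /=.
by rewrite mulr1 addNr.
Qed.

Lemma hom_path {X Y : topologicalType} (U : set X) (p : R -> Y) (c d : Y) :
  {within unitI, continuous p} -> p 0%R = c -> p 1%R = d ->
  homotopic_on U (fun _ => c) (fun _ => d).
Proof.
move=> cp p0 p1; exists (fun q => p q.2); split => //.
apply: (within_comp_sub (k := snd) (h := p) (S' := unitI)) => //.
  exact/continuous_subspaceT/snd_cont.
by move=> [x t] [].
Qed.

Lemma hom_trans {X Y : topologicalType} (U : set X) (f g h : X -> Y) :
  homotopic_on U f g -> homotopic_on U g h -> homotopic_on U f h.
Proof.
move=> [H1 [c1 e1]] [H2 [c2 e2]].
pose k1 := fun q : X * R => (q.1, 2 * q.2 + 0).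
pose k2 := fun q : X * R => (q.1, 2 * q.2 + -1).
have ck1 : continuous k1 by apply: pair_cont; [exact: fst_cont|exact: aff_snd_cont].
have ck2 : continuous k2 by apply: pair_cont; [exact: fst_cont|exact: aff_snd_cont].
exists (fun q => if q.2 <= 2^-1 then H1 (k1 q) else H2 (k2 q)); split.
  apply: (paste (A := [set q : X * R | q.2 <= 2^-1]) (B := [set q : X * R | 2^-1 <= q.2])).
  - have := proj1 (continuous_closedP (@snd X R)) snd_cont _ (@closed_le _ (2^-1 : R^o)).
    by [].
  - have := proj1 (continuous_closedP (@snd X R)) snd_cont _ (@closed_ge _ (2^-1 : R^o)).
    by [].
  - move=> q _; case: (lerP q.2 2^-1) => hq; [left|right] => //.
    exact: ltW.
  - apply: (subspace_eq_continuous (f := from_subspace _ (H1 \o k1))).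
      by move=> q; rewrite inE /from_subspace /= => -[_ ->].
    apply: (within_comp_sub (S' := U `*` unitI)) => //.
      exact: continuous_subspaceT.
    move=> [x t] [[/= Ux]]; rewrite unitIE => /andP[t0 t1] th; split => //=.
    by rewrite unitIE; apply/andP; split; lra.
  - apply: (subspace_eq_continuous (f := from_subspace _ (H2 \o k2))).
      move=> q; rewrite inE /from_subspace /= => -[[Uq _] hq].
      case: ifPn => // hq'.
      have e : 2 * q.2 + 0 = 1 by lra.
      have e' : 2 * q.2 + -1 = 0 by lra.
      rewrite /k1 /k2 /= e e'.
      by have [-> _] := e2 _ Uq; have [_ ->] := e1 _ Uq.
    apply: (within_comp_sub (S' := U `*` unitI)) => //.
      exact: continuous_subspaceT.
    move=> [x t] [[/= Ux]]; rewrite unitIE => /andP[t0 t1] th; split => //=.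
    by rewrite unitIE; apply/andP; split; lra.
move=> x Ux; split.
  have hh : @GRing.zero R <= 2^-1 by lra.
  rewrite /= ifT //= /k1 /= mulr0 addr0.
  exact: (e1 x Ux).1.
have hh : (@GRing.one R <= 2^-1) = false by apply/negbTE; rewrite -ltNge; lra.
have e : 2 * 1 + -1 = @GRing.one R by lra.
rewrite /= hh /k2 /= e.
exact: (e2 x Ux).2.
Qed.

Lemma least_ext_spec (P : nat -> Prop) :
  (least_ext P = None /\ ~ (exists n, P n)) \/
  exists n, least_ext P = Some n /\ P n /\ forall m, P m -> leq n m.
Proof.
rewrite /least_ext; case: pselect => h; [right|left; split => //].
case: ex_minnP => n /asboolP hn hmin; exists n; split => //; split => // m Pm.
by apply: hmin; apply/asboolP.
Qed.

Theorem theorem4p1 (G : topologicalType) (mu delta : (G * G)%type -> G) (x0 : G)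
  (f g : (G * G)%type -> G) :
  path_connected G -> is_Hspace mu delta x0 ->
  continuous f -> continuous g ->
  ole (hdist f g) (LScat G).
Proof.
move=> [_ pc] [cmu [cdelta [hA hB]]] cf cg.
rewrite /LScat; case: (least_ext_spec (cat_le G)) => [[-> _]|[n [-> [hn _]]]].
  by case: (hdist f g).
suff hl : hdist_le f g n.
  rewrite /hdist; case: (least_ext_spec (hdist_le f g)) => [[_ nh]|[m [-> [_ hm]]]].
    by exfalso; apply: nh; exists n.
  exact: hm.
case: hn => U [oU [covU nhU]].
pose phi := fun p : G * G => delta (f p, g p).
have cfg : continuous (fun p : G * G => (f p, g p)) by exact: pair_cont.
have cphi : continuous phi.
  by move=> p; apply: (continuous_comp (cfg p) (cdelta _)).
exists (fun j => phi @^-1` U j); split; [|split].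
- by move=> j hj; exact: (proj1 (continuousP phi) cphi _ (oU j hj)).
- by move=> p; case: (covU (phi p)) => j hj Ujp; exists j.
move=> j hj; case: (nhU j hj) => c hc.
set W := phi @^-1` U j.
have s1 : homotopic_on W phi (fun _ => c).
  exact: (hom_pre (V := U j) (k := phi) cphi (fun x Wx => Wx) hc).
have [p [cp [p0 p1]]] := pc c x0.
have s2 : homotopic_on W (fun _ => c) (fun _ => x0) by exact: hom_path cp p0 p1.
have s3 := hom_trans s1 s2.
have s4 := hom_pair cmu cf s3.
have s5 : homotopic_on W ((fun x => mu (x, x0)) \o f) (idfun \o f).
  exact: (hom_pre (V := setT) cf (fun _ _ => I) hB).
have s6 : homotopic_on W (fun p => mu (f p, phi p)) g.
  exact: (hom_pre (V := setT) cfg (fun _ _ => I) hA).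
apply: hom_trans (hom_sym s5) _.
exact: hom_trans (hom_sym s4) s6.
Qed.
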